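(* Fix integers $1\le a_1<a_2$, and let $\mathcal{A}$ be an infinite set of primes $n>2a_2$. Let $\{\mathcal{B}_n\}_{n\in\mathcal{A}}$ be any sequence where each $\mathcal{B}_n$ is a real orthonormal basis of $\mathbb{R}^n$ consisting of eigenvectors of $A(C_n(a_1,a_2))$. Then there exist $p\in(0,1)$, a sequence of vertex subsets $S_n\subset\{0,\dots,n-1\}$ with $\lim_{n\to\infty}|S_n|/n=p$, and a sequence of eigenvectors $\varphi_n\in\mathcal{B}_n$, such that $\mu_{\varphi_n}(S_n)$ does not converge to $p$ as $n\to\infty$, $n\in\mathcal{A}$.
   Context: A circulant graph $C_n(a_1,a_2)$, with integers $1\le a_1<a_2\le n/2$, has vertex set $V=\{0,1,\dots,n-1\}$, and $i\sim j$ if and only if $i-j\equiv \pm a_1$ or $\pm a_2 \pmod n$; it is 4-regular. Its adjacency matrix $A(C_n(a_1,a_2))$ is the $n\times n$ matrix with $A_{ij}=1$ if $i\sim j$ and $0$ otherwise. For a unit vector $\psi\in\mathbb{R}^n$, $\mu_\psi(S)=\sum_{v\in S}|\psi(v)|^2$ for $S\subset V$. *)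

(* Defs.v *)
From HB Require Import structures.
From mathcomp Require Import all_boot all_order all_algebra.
From mathcomp Require Import reals.
Set Implicit Arguments. Unset Strict Implicit. Unset Printing Implicit Defensive.
Import Order.TTheory GRing.Theory Num.Theory.
Local Open Scope ring_scope.

Definition circ_adjb (n a1 a2 : nat) (i j : 'I_n) : bool :=
  let d := ((i + n - j) %% n)%N in
  [|| d == (a1 %% n)%N, d == ((n - a1) %% n)%N, d == (a2 %% n)%N | d == ((n - a2) %% n)%N].

Definition circ_adj (R : nzRingType) (n a1 a2 : nat) : 'M[R]_n :=
  \matrix_(i, j) (if circ_adjb a1 a2 i j then 1 else 0).

Definition mu (R : realType) (n : nat) (psi : 'cV[R]_n) (S : {set 'I_n}) : R :=
  \sum_(v in S) `|psi v ord0| ^+ 2.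

Definition conv_along (R : realType) (A : pred nat) (x : nat -> R) (l : R) : Prop :=
  forall eps : R, 0 < eps -> exists N : nat, forall n : nat, A n -> (N <= n)%N ->
    `|x n - l| < eps.

Definition infinite_nat (A : pred nat) : Prop :=
  forall N : nat, exists n : nat, (N <= n)%N /\ A n.

Definition orthonormal_eigenbasis (R : realType) (n : nat) (M B : 'M[R]_n) : Prop :=
  B^T *m B = 1%:M /\
  forall i : 'I_n, exists lam : R, M *m col i B = lam *: col i B.

(* Main.v *)
Require Import Defs.
From mathcomp Require Import all_boot all_order all_algebra reals.
From mathcomp Require Import zify ring lra.
Import Order.TTheory GRing.Theory Num.Theory.
Local Open Scope ring_scope.

Definition sh (n d : nat) (v : 'I_n.+1) : 'I_n.+1 := Ordinal (ltn_pmod (v + d) (ltn0Sn n)).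
Definition sg (n a k : nat) : 'I_n.+1 := Ordinal (ltn_pmod (k * a) (ltn0Sn n)).

Lemma sh_inj n d : injective (sh n d).
Proof.
move=> u v /(congr1 val) /= /eqP; rewrite eqn_modDr => /eqP H.
apply/val_inj; rewrite /= -(modn_small (ltn_ord u)) -(modn_small (ltn_ord v)); exact H.
Qed.

Lemma sum_sh (R : nzRingType) n d (F : 'I_n.+1 -> R) :
  \sum_v F (sh n d v) = \sum_v F v.
Proof. by rewrite [RHS](reindex_inj (sh_inj n d)). Qed.

Lemma sg_inj n a k0 : prime n.+1 -> (0 < a < n.+1)%N ->
  injective (fun t : 'I_n.+1 => sg n a (k0 + t)).
Proof.
move=> pr /andP[a0 an].
have cop : coprime n.+1 a by rewrite prime_coprime // gtnNdvd.
have key : forall t t' : 'I_n.+1, (t <= t')%N ->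
   ((k0 + t) * a == (k0 + t') * a %[mod n.+1]) -> t = t'.
  move=> t t' le; rewrite !mulnDl eqn_modDl eq_sym eqn_mod_dvd ?leq_mul2r ?le ?orbT //.
  rewrite -mulnBl Gauss_dvdl // => dv.
  apply/val_inj/eqP; rewrite eqn_leq le /=.
  case: (posnP (t' - t)) => [/eqP|pos]; first by rewrite subn_eq0.
  have := dvdn_leq pos dv; have := ltn_ord t'; lia.
move=> t t' /(congr1 val) /= /eqP E.
case: (leqP t t') => le; first exact: key.
by apply/esym/key; [exact: ltnW | rewrite eq_sym].
Qed.

Lemma sum_sg (R : nzRingType) n a k0 (F : 'I_n.+1 -> R) : prime n.+1 -> (0 < a < n.+1)%N ->
  \sum_(t < n.+1) F (sg n a (k0 + t)) = \sum_v F v.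
Proof. by move=> pr ha; rewrite [RHS](reindex_inj (@sg_inj n a k0 pr ha)). Qed.

Lemma sg_succ n a k : sg n a k.+1 = sh n a (sg n a k).
Proof. by apply/val_inj => /=; rewrite mulSn addnC modnDml. Qed.

Lemma mod2 N x : (0 < N)%N -> (x < 2 * N)%N -> (x %% N = if x < N then x else x - N)%N.
Proof.
move=> N0 h; case: ifP => hx; first by rewrite modn_small.
have -> : x = (x - N + N)%N by rewrite subnK //; lia.
rewrite modnDr modn_small; lia.
Qed.

Lemma dist_sh n (v w : 'I_n.+1) e : (0 < e < n.+1)%N ->
  (((v + n.+1 - w) %% n.+1)%N == e) = (w == sh n (n.+1 - e) v).
Proof.
move=> /andP[e0 en]; have hv := ltn_ord v; have hw := ltn_ord w.
apply/eqP/eqP => [H|->].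
  apply/val_inj => /=. move: H; rewrite !mod2; try lia. case: ifP; case: ifP; lia.
rewrite /=. rewrite (@mod2 n.+1 (v + (n.+1 - e))); try lia. case: ifP => h; rewrite mod2; try lia; case: ifP; lia.
Qed.

Lemma sh_eq n d d' (v : 'I_n.+1) : (d < n.+1)%N -> (d' < n.+1)%N -> sh n d v = sh n d' v -> d = d'.
Proof. move=> hd hd' /(congr1 val) /=. have := ltn_ord v. move=> hv. rewrite !mod2; try lia. case: ifP; case: ifP; lia. Qed.

Lemma adj_sh n a1 a2 (v w : 'I_n.+1) : (0 < a1)%N -> (a1 < a2)%N -> (2 * a2 < n.+1)%N ->
  circ_adjb a1 a2 v w = [|| w == sh n (n.+1 - a1) v, w == sh n a1 v, w == sh n (n.+1-a2) v | w == sh n a2 v].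
Proof.
move=> h1 h12 h2.
rewrite /circ_adjb !(modn_small (_ : a1 < n.+1)%N) ?(modn_small (_ : a2 < n.+1)%N); try lia.
rewrite !(modn_small (_ : n.+1 - a1 < n.+1)%N) ?(modn_small (_ : n.+1 - a2 < n.+1)%N); try lia.
rewrite !dist_sh; try lia.
by rewrite !subKn //; lia.
Qed.

Lemma nbr (R : nzRingType) n a1 a2 (v : 'I_n.+1) (f : 'I_n.+1 -> R) :
  (0 < a1)%N -> (a1 < a2)%N -> (2 * a2 < n.+1)%N ->
  \sum_w (if circ_adjb a1 a2 v w then 1 else 0) * f w =
  f (sh n a1 v) + f (sh n (n.+1 - a1) v) + f (sh n a2 v) + f (sh n (n.+1 - a2) v).
Proof.
move=> h1 h12 h2.
set p1 := sh n (n.+1 - a1) v; set p2 := sh n a1 v; set p3 := sh n (n.+1 - a2) v; set p4 := sh n a2 v.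
have D : forall d d', (d < n.+1)%N -> (d' < n.+1)%N -> d <> d' -> (sh n d v == sh n d' v) = false.
  by move=> d d' hd hd' ne; apply/eqP => /sh_eq; auto.
have d12 : (p1 == p2) = false by apply: D; lia.
have d13 : (p1 == p3) = false by apply: D; lia.
have d14 : (p1 == p4) = false by apply: D; lia.
have d23 : (p2 == p3) = false by apply: D; lia.
have d24 : (p2 == p4) = false by apply: D; lia.
have d34 : (p3 == p4) = false by apply: D; lia.
have E : forall w, (if circ_adjb a1 a2 v w then 1 else 0) * f w =
   (if w == p1 then f p1 else 0) + (if w == p2 then f p2 else 0) +
   (if w == p3 then f p3 else 0) + (if w == p4 then f p4 else 0).
  move=> w; rewrite adj_sh //.
  case: (w =P p1) => [->|_]; rewrite ?eqxx ?d12 ?d13 ?d14 /=; first by rewrite mul1r !addr0.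
  case: (w =P p2) => [->|_]; rewrite ?eqxx ?d23 ?d24 ?(eq_sym p2) ?d12 /=; first by rewrite mul1r add0r !addr0.
  case: (w =P p3) => [->|_]; rewrite ?eqxx ?d34 ?(eq_sym p3) ?d13 ?d23 /=; first by rewrite mul1r !add0r addr0.
  case: (w =P p4) => [->|_]; rewrite ?eqxx ?(eq_sym p4) ?d14 ?d24 ?d34 /=; first by rewrite mul1r !add0r.
  by rewrite mul0r !addr0.
rewrite (eq_bigr _ (fun w _ => E w)) !big_split /=.
have S : forall p (c : R), \sum_(w : 'I_n.+1) (if w == p then c else 0) = c.
  by move=> p c; rewrite -big_mkcond big_pred1_eq.
rewrite !S /p1 /p2 /p3 /p4.
have P : forall x1 x2 x3 x4 : R, x1+x2+x3+x4 = x2+x1+x4+x3 by move=> x1 x2 x3 x4; rewrite (addrC x1) -!addrA (addrC x3).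
exact: P.
Qed.

Lemma quad_decomp (R : realType) N (M B : 'M[R]_N) (lam : 'rV[R]_N) (X : 'cV[R]_N) :
  B^T *m B = 1%:M -> M *m B = B *m diag_mx lam ->
  (X^T *m X) 0 0 = \sum_i (B^T *m X) i 0 ^+ 2 /\
  (X^T *m (M *m X)) 0 0 = \sum_i lam 0 i * (B^T *m X) i 0 ^+ 2.
Proof.
move=> H HM; set c := B^T *m X.
have BBt : B *m B^T = 1%:M := mulmx1C H.
have XBc : X = B *m c by rewrite /c mulmxA BBt mul1mx.
split.
  have -> : X^T *m X = c^T *m c.
    by rewrite {1 2}XBc trmx_mul -mulmxA (mulmxA B^T) H mul1mx.
  rewrite mxE.
  by apply: eq_bigr => i _; rewrite mxE expr2.
have -> : X^T *m (M *m X) = c^T *m diag_mx lam *m c.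
  by rewrite {1 2}XBc trmx_mul (mulmxA M) HM -!mulmxA (mulmxA B^T) H mul1mx.
rewrite mxE.
apply: eq_bigr => i _; by rewrite mul_mx_diag !mxE expr2 mulrAC mulrC.
Qed.

Lemma eig_MB (R : realType) N (M B : 'M[R]_N) :
  (forall i : 'I_N, exists lam : R, M *m col i B = lam *: col i B) ->
  exists lam : 'rV[R]_N, M *m B = B *m diag_mx lam /\
     forall i v, \sum_w M v w * B w i = lam 0 i * B v i.
Proof.
move=> H; have [l Hl] := fin_all_exists H.
exists (\row_i l i).
have E : forall i v, \sum_w M v w * B w i = l i * B v i.
  move=> i v; have := congr1 (fun Y : 'cV[R]_N => Y v ord0) (Hl i); rewrite !mxE => <-.
  by apply: eq_bigr => w _; rewrite !mxE.
split; last by move=> i v; rewrite E mxE.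
apply/matrixP => v i; rewrite mul_mx_diag !mxE E; ring.
Qed.

Definition Qe (R : realType) n a1 a2 (f : 'I_n.+1 -> R) :=
  \sum_v ((f (sh n a1 v) - f v) ^+ 2 + (f (sh n a2 v) - f v) ^+ 2).

Arguments Qe {R n}.
Arguments sum_sh {R n}.
Arguments sum_sg {R n}.

Lemma sh_back n a (v : 'I_n.+1) : (a <= n.+1)%N -> sh n (n.+1 - a) (sh n a v) = v.
Proof.
move=> ha; apply/val_inj => /=; rewrite modnDml -addnA subnKC //.
by rewrite modnDr modn_small.
Qed.

Lemma energy (R : realType) n a1 a2 (f : 'I_n.+1 -> R) :
  (0 < a1)%N -> (a1 < a2)%N -> (2 * a2 < n.+1)%N ->
  \sum_v f v * (\sum_w (if circ_adjb a1 a2 v w then 1 else 0) * f w) =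
  4 * \sum_v f v ^+ 2 - Qe a1 a2 f.
Proof.
move=> h1 h12 h2.
have back : forall a, (a <= n.+1)%N ->
   \sum_v f v * f (sh n (n.+1 - a) v) = \sum_v f v * f (sh n a v).
  move=> a ha; rewrite -(sum_sh a (fun v => f v * f (sh n (n.+1 - a) v))) /=.
  by apply: eq_bigr => v _; rewrite sh_back // mulrC.
have sq : forall a, \sum_v f (sh n a v) ^+ 2 = \sum_v f v ^+ 2.
  by move=> a; rewrite (sum_sh a (fun v => f v ^+ 2)).
rewrite (eq_bigr (fun v => f v * f (sh n a1 v) + f v * f (sh n (n.+1 - a1) v) +
   f v * f (sh n a2 v) + f v * f (sh n (n.+1 - a2) v))); last first.
  by move=> v _; rewrite nbr // !mulrDr.
rewrite !big_split /= !back; try lia.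
rewrite /Qe [X in _ - X](eq_bigr (fun v => f (sh n a1 v) ^+ 2 + f (sh n a2 v) ^+ 2 + 2 * f v ^+ 2
   - 2 * (f v * f (sh n a1 v)) - 2 * (f v * f (sh n a2 v)))); last first.
  by move=> v _; ring.
rewrite !sumrB !big_split /= -!mulr_sumr !sq; ring.
Qed.

Arguments Qe {R n}.
Arguments sum_sh {R n}.
Arguments sum_sg {R n}.

Definition Dn (N u : nat) : nat := minn (u %% N) (N - u %% N).

Lemma Dn_mod N u : Dn N (u %% N) = Dn N u.
Proof. by rewrite /Dn modn_mod. Qed.

Lemma Dn_step N u : (0 < N)%N -> (Dn N u.+1 <= Dn N u + 1)%N /\ (Dn N u <= Dn N u.+1 + 1)%N.
Proof.
move=> N0; rewrite /Dn -addn1 -modnDml.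
have r := ltn_pmod u N0.
rewrite mod2 //; last lia.
move: (u %% N)%N r => k r; case: ifP => H; lia.
Qed.

Lemma Dn_lip N d u : (0 < N)%N -> (Dn N (u + d) <= Dn N u + d)%N /\ (Dn N u <= Dn N (u + d) + d)%N.
Proof.
move=> N0; elim: d => [|d [IH1 IH2]]; first by rewrite !addn0.
have [S1 S2] := Dn_step N (u + d) N0.
rewrite addnS; lia.
Qed.

Lemma lip_real (R : realType) (a b d : nat) : (a <= b + d)%N -> (b <= a + d)%N ->
  (a%:R - b%:R : R) ^+ 2 <= d%:R ^+ 2.
Proof.
rewrite -!(ler_nat R) !natrD => h1 h2.
have d0 : (0 : R) <= d%:R by [].
set A := a%:R in h1 h2 *; set Bb := b%:R in h1 h2 *; set D := d%:R in h1 h2 d0 *.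
have e1 : 0 <= D - (A - Bb) by lra.
have e2 : 0 <= D + (A - Bb) by lra.
have := mulr_ge0 e1 e2. rewrite !expr2. lra.
Qed.

Definition xt (R : realType) n (v : 'I_n.+1) : R :=
  (Dn n.+1 v)%:R - (Dn n.+1 (v + n.+1 %/ 2)%N)%:R.

Arguments xt R {n}.

Lemma xt_sum (R : realType) n : \sum_(v : 'I_n.+1) xt R v = 0.
Proof.
rewrite /xt sumrB.
rewrite -(sum_sh (n.+1 %/ 2)%N (fun v : 'I_n.+1 => (Dn n.+1 v)%:R : R)) /=.
by apply/eqP; rewrite subr_eq0; apply/eqP; apply: eq_bigr => v _; rewrite Dn_mod.
Qed.

Lemma xt_sh (R : realType) n d (v : 'I_n.+1) :
  xt R (sh n d v) = (Dn n.+1 (v + d)%N)%:R - (Dn n.+1 (v + n.+1 %/ 2 + d)%N)%:R.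
Proof.
rewrite /xt /= Dn_mod; congr (_ - (_ %:R)).
by rewrite -Dn_mod modnDml Dn_mod addnAC.
Qed.

Lemma xt_energy (R : realType) n a1 a2 : (a1 <= a2)%N ->
  Qe a1 a2 (@xt R n) <= 8 * (a2 ^ 2)%:R * n.+1%:R.
Proof.
move=> h12.
have pt : forall d (v : 'I_n.+1), (xt R (sh n d v) - xt R v) ^+ 2 <= 4 * (d ^ 2)%:R.
  move=> d v; rewrite xt_sh /xt.
  have [A1 A2] := Dn_lip n.+1 d v (ltn0Sn n).
  have [B1 B2] := Dn_lip n.+1 d (v + n.+1 %/ 2)%N (ltn0Sn n).
  have h1 := @lip_real R _ _ _ A1 A2; have h2 := @lip_real R _ _ _ B1 B2.
  rewrite natrX.
  set p := _%:R in h1 *; set q := _%:R in h1 *; set r := _%:R in h2 *; set s := _%:R in h2 *.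
  set D := d%:R in h1 h2 *.
  have D0 : 0 <= D by [].
  have E : p - r - (q - s) = (p - q) - (r - s) by ring.
  rewrite E. set u := p - q in h1 *; set w := r - s in h2 *.
  have := sqr_ge0 (u + w). rewrite !expr2 in h1 h2 *. nra.
apply: le_trans (_ : \sum_(v < n.+1) (4 * (a1 ^ 2)%:R + 4 * (a2 ^ 2)%:R) <= _).
  by apply: ler_sum => v _; apply: lerD; apply: pt.
rewrite sumr_const card_ord -mulr_natr.
have : (a1 ^ 2 <= a2 ^ 2)%N by rewrite leq_exp2r.
rewrite -(ler_nat R) => h.
have n0 : (0 : R) <= n.+1%:R by [].
nra.
Qed.

Lemma xt_big n (v : nat) : (4 * v <= n.+1 %/ 2)%N ->
  (n.+1 %/ 2 + 2 * Dn n.+1 v <= 2 * Dn n.+1 (v + n.+1 %/ 2))%N.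
Proof.
move=> hv; rewrite /Dn.
have h := divn_eq n.+1 2; have h2 := ltn_pmod n.+1 (isT : (0 < 2)%N).
move: hv h h2; set h := (n.+1 %/ 2)%N; set r := (n.+1 %% 2)%N => hv E hr.
rewrite !modn_small; lia.
Qed.

Lemma xt_norm (R : realType) n : (1 <= n)%N ->
  n.+1%:R ^+ 3 / 1024 <= \sum_(v : 'I_n.+1) xt R v ^+ 2.
Proof.
move=> n1.
set h := (n.+1 %/ 2)%N.
set q := (h %/ 4).+1.
have hq : (q <= n.+1)%N.
  have := divn_eq n.+1 2; have := divn_eq h 4; rewrite -/h; lia.
have F : forall v : nat, (v < q)%N -> (h%:R / 2) ^+ 2 <= ((Dn n.+1 v)%:R - (Dn n.+1 (v + h)%N)%:R : R) ^+ 2.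
  move=> v vq.
  have : (4 * v <= h)%N by have := divn_eq h 4; rewrite /q in vq; lia.
  move/xt_big; rewrite -/h -(ler_nat R) natrD !natrM => H.
  set a := (Dn _ v)%:R in H *; set b := (Dn _ _)%:R in H *.
  have h0 : (0 : R) <= h%:R by [].
  have : h%:R / 2 <= b - a by lra.
  move=> H2. rewrite !expr2. nra.
have S1 : \sum_(v < q) ((Dn n.+1 v)%:R - (Dn n.+1 (v + h)%N)%:R : R) ^+ 2 <= \sum_(v : 'I_n.+1) xt R v ^+ 2.
  rewrite (big_ord_widen n.+1 (fun v => ((Dn n.+1 v)%:R - (Dn n.+1 (v + h)%N)%:R : R) ^+ 2) hq).
  rewrite [X in _ <= X](bigID (fun v : 'I_n.+1 => (v < q)%N)) /= lerDl.
  by apply: sumr_ge0 => v _; apply: sqr_ge0.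
apply: le_trans S1.
apply: le_trans (_ : \sum_(v < q) (h%:R / 2) ^+ 2 <= _); last first.
  by apply: ler_sum => v _; apply: F.
rewrite sumr_const card_ord -[_ *+ q]mulr_natr.
have : (n.+1 <= 16 * q)%N by have := divn_eq n.+1 2; have := divn_eq h 4; rewrite /q -/h; lia.
have : (n.+1 <= 4 * h)%N by have := divn_eq n.+1 2; have := ltn_pmod n.+1 (isT : (0 < 2)%N); rewrite -/h; lia.
rewrite -!(ler_nat R) !natrM.
set NN := n.+1%:R; set H := h%:R; set Q := q%:R.
have N0 : 0 <= NN by [].
move=> hH hQ.
have H0 : NN / 4 <= H by lra.
have Q0 : NN / 16 <= Q by lra.
have NN4 : 0 <= NN / 4 by lra.
have e2 : NN ^+ 3 / 1024 = ((NN / 8) ^+ 2) * (NN / 16) by rewrite !expr2 exprS expr2; field.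
rewrite e2.
have e3 : (NN / 8) ^+ 2 <= (H / 2) ^+ 2.
  have a1 : 0 <= NN / 8 by lra.
  have a2 : NN / 8 <= H / 2 by lra.
  rewrite !expr2; exact: ler_pM.
apply: ler_pM; try lra.
by rewrite expr2; apply: mulr_ge0; lra.
Qed.

Lemma step_ineq (R : realType) (J w d Q : R) : 0 < J -> w ^+ 2 <= J * Q ->
  (w + d) ^+ 2 <= (J + 1) * (Q + d ^+ 2).
Proof.
move=> J0 H.
have K : J * ((J + 1) * (Q + d ^+ 2) - (w + d) ^+ 2) = (J + 1) * (J * Q - w ^+ 2) + (w - J * d) ^+ 2 by ring.
have : 0 <= J * ((J + 1) * (Q + d ^+ 2) - (w + d) ^+ 2).
  rewrite K; apply: addr_ge0; last exact: sqr_ge0.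
  apply: mulr_ge0; lra.
rewrite pmulr_rge0 // subr_ge0 //.
Qed.

Lemma walk_bound (R : realType) (w : nat -> R) k0 : w k0 * w k0.+1 <= 0 -> forall j,
  w (k0 + j)%N ^+ 2 <= j.+1%:R * ((w k0.+1 - w k0) ^+ 2 +
     \sum_(t < j) (w (k0 + t).+1 - w (k0 + t)%N) ^+ 2).
Proof.
move=> H0; elim=> [|j IH].
  rewrite addn0 big_ord0 addr0 mul1r.
  set a := w k0 in H0 *; set b := w k0.+1 in H0 *.
  rewrite !expr2; nra.
rewrite big_ord_recr /= addrA.
have -> : w (k0 + j.+1)%N = w (k0 + j)%N + (w (k0 + j).+1 - w (k0 + j)%N) by rewrite addnS; ring.
rewrite -[j.+2]addn1 natrD.
apply: step_ineq => //.
Qed.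

Lemma zero_cross (R : realType) (w : nat -> R) N : (0 < N)%N -> \sum_(t < N) w t = 0 ->
  exists k0, (k0 < N)%N /\ w k0 * w k0.+1 <= 0.
Proof.
move=> N0 S.
case: (boolP [exists k : 'I_N, w k * w k.+1 <= 0]).
  by move=> /existsP [k Hk]; exists k; split.
move=> /existsPn H.
have pos : forall k, (k < N)%N -> 0 < w k * w 0.
  elim=> [_|k IH kN].
    have := H (Ordinal N0); rewrite -ltNge /= => h.
    have : w 0%N != 0 by apply/eqP => e; move: h; rewrite e mul0r ltxx.
    by move=> nz; rewrite -expr2 exprn_even_gt0.
  have h1 := IH (ltnW kN).
  have := H (Ordinal (ltnW kN)); rewrite -ltNge /= => h2.
  set a := w k in h1 h2 *; set b := w k.+1 in h2 *; set c := w 0%N in h1 *.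
  have : 0 < (a * b) * (a * c) by apply: mulr_gt0.
  have e : (a * b) * (a * c) = (a * a) * (b * c) by ring.
  rewrite e; have : 0 < a * a.
    have : a != 0 by apply/eqP => e0; move: h1; rewrite e0 mul0r ltxx.
    by move=> nz; rewrite -expr2 exprn_even_gt0.
  by move=> aa; rewrite pmulr_rgt0.
have : \sum_(t < N) w t * w 0%N = 0 by rewrite -mulr_suml S mul0r.
case: N N0 S H pos => // N' _ _ _ pos.
rewrite big_ord_recl /=.
have : 0 < w 0%N * w 0%N by apply: pos.
have : 0 <= \sum_(i < N') w (bump 0 i) * w 0%N.
  by apply: sumr_ge0 => i _; apply: ltW; apply: pos; rewrite /bump /=; case: i => i /=; lia.
lra.
Qed.

Arguments Qe {R n}.
Arguments sum_sh {R n}.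
Arguments sum_sg {R n}.
Arguments xt R {n}.
Arguments eig_MB {R N M B}.
Arguments quad_decomp {R N M B lam}.
Arguments energy {R n a1 a2}.
Arguments nbr {R n a1 a2}.

Lemma contra16 (R : realType) (P : R) : 0 < P -> 16 * P <= 8 * P -> False.
Proof. move=> *; lra. Qed.

Lemma final_arith (R : realType) (Lr mr Nr E A C : R) : 0 <= Lr -> 0 < mr -> 0 <= E ->
  Lr * mr <= Nr -> E * Nr ^+ 2 <= C * A -> 8 * (C * A) <= mr ->
  4 * mr * (Lr * (Lr * (2 * E))) <= 1.
Proof.
move=> L0 m0 E0 h1 h2 h3.
have Lm0 : 0 <= Lr * mr by apply: mulr_ge0; lra.
have s1 : (Lr * mr) ^+ 2 <= Nr ^+ 2 by rewrite !expr2; apply: ler_pM.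
have s2 : E * (Lr * mr) ^+ 2 <= E * Nr ^+ 2 by apply: ler_wpM2l.
have s3 : mr * (E * Lr ^+ 2 * mr) <= mr * (1 / 8).
  have -> : mr * (E * Lr ^+ 2 * mr) = E * (Lr * mr) ^+ 2 by rewrite !expr2; ring.
  have -> : mr * (1 / 8) = mr / 8 by ring.
  lra.
rewrite ler_pM2l // in s3.
have -> : 4 * mr * (Lr * (Lr * (2 * E))) = 8 * (E * Lr ^+ 2 * mr) by rewrite !expr2; ring.
lra.
Qed.

Lemma core (R : realType) n a1 a2 (B : 'M[R]_n.+1) (m : nat) :
  (0 < a1)%N -> (a1 < a2)%N -> (2 * a2 < n.+1)%N -> prime n.+1 ->
  orthonormal_eigenbasis (circ_adj R n.+1 a1 a2) B ->
  (8 * (16 * 1024 * a2 ^ 2) <= m)%N ->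
  exists (S : {set 'I_n.+1}) (i : 'I_n.+1),
    #|S| = (n.+1 %/ m)%N /\ 4 * m%:R * mu (col i B) S <= 1.
Proof.
move=> h1 h12 h2 pr [HBB Heig] hm.
have n1 : (1 <= n)%N by lia.
have A0 : (0 < a2 ^ 2)%N by rewrite expn_gt0; lia.
have m0 : (0 < m)%N.
  apply: leq_trans hm. by rewrite muln_gt0 /= muln_gt0 A0 andbT.
set M := circ_adj R n.+1 a1 a2.
have [lam [HMB Hlam]] := eig_MB Heig.
have Ment : forall v w, M v w = if circ_adjb a1 a2 v w then 1 else 0 by move=> v w; rewrite mxE.
set X := \col_v xt R v : 'cV[R]_n.+1.
have [QD1 QD2] := quad_decomp X HBB HMB.
set c := fun i => (B^T *m X) i 0.
have eX1 : (X^T *m X) 0 0 = \sum_(v : 'I_n.+1) xt R v ^+ 2.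
  by rewrite mxE; apply: eq_bigr => v _; rewrite !mxE expr2.
have eX2 : (X^T *m (M *m X)) 0 0 =
    \sum_(v : 'I_n.+1) xt R v * (\sum_(w : 'I_n.+1) (if circ_adjb a1 a2 v w then 1 else 0) * xt R w).
  rewrite mxE; apply: eq_bigr => v _; rewrite !mxE; congr (_ * _).
  by apply: eq_bigr => w _; rewrite Ment mxE.
have EN := energy (xt R (n:=n)) h1 h12 h2.
have Kc : \sum_i (4 - lam 0 i) * c i ^+ 2 = Qe a1 a2 (xt R (n:=n)).
  have -> : \sum_i (4 - lam 0 i) * c i ^+ 2 = 4 * \sum_i c i ^+ 2 - \sum_i lam 0 i * c i ^+ 2.
    by rewrite mulr_sumr -sumrB; apply: eq_bigr => i _; ring.
  rewrite /c -QD1 -QD2 eX1 eX2 EN; ring.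
set A : R := (a2 ^ 2)%:R.
set K : R := 16 * 1024 * A.
set NN : R := n.+1%:R.
have NN0 : 0 < NN by rewrite ltr0n.
have QX := @xt_energy R n a1 a2 (ltnW h12).
have NX := @xt_norm R n n1.
have [i /andP [ci0 Hi]] : exists i, (c i != 0) && ((4 - lam 0 i) * NN ^+ 2 <= K).
  case: (boolP [exists i, (c i != 0) && ((4 - lam 0 i) * NN ^+ 2 <= K)]).
    by move/existsP.
  move/existsPn => H; exfalso.
  have pt : forall i, K * c i ^+ 2 <= NN ^+ 2 * ((4 - lam 0 i) * c i ^+ 2).
    move=> i; have := H i; case: (c i =P 0) => [->|/eqP nz] /=.
      by rewrite expr0n /= !mulr0.
    rewrite -ltNge => lt.
    have : 0 < c i ^+ 2 by rewrite exprn_even_gt0.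
    move=> cp; rewrite mulrA [NN ^+ 2 * _]mulrC -mulrA -expr2 [X in _ <= X]mulrAC.
    by apply: ler_wpM2r; [exact: ltW | exact: ltW].
  have S1 : K * \sum_i c i ^+ 2 <= NN ^+ 2 * Qe a1 a2 (xt R (n:=n)).
    by rewrite -Kc !mulr_sumr; apply: ler_sum => i _; apply: pt.
  have Sc : \sum_i c i ^+ 2 = \sum_(v : 'I_n.+1) xt R v ^+ 2 by rewrite /c -QD1 eX1.
  rewrite Sc in S1.
  have K0 : 0 <= K by apply: mulr_ge0; [apply: mulr_ge0; exact: ler0n | exact: ler0n].
  have t1 := ler_wpM2l K0 NX.
  have N20 : 0 <= NN ^+ 2 by apply: sqr_ge0.
  have t2 := ler_wpM2l N20 QX.
  have A1 : (1 : R) <= A by rewrite ler1n.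
  have P0 : 0 < A * NN ^+ 3 by apply: mulr_gt0; [lra| exact: exprn_gt0].
  have e1 : 16 * 1024 * A * (NN ^+ 3 / 1024) = 16 * (A * NN ^+ 3) by field.
  have e2 : NN ^+ 2 * (8 * A * NN) = 8 * (A * NN ^+ 3) by rewrite !exprS expr0; ring.
  rewrite e1 in t1; rewrite e2 in t2.
  have := le_trans (le_trans t1 S1) t2.
  move: P0; generalize (A * NN ^+ 3) => P. move=> P0 HP. apply: (@contra16 R P). exact: P0. exact: HP.
set b := fun v => B v i.
have bn : \sum_v b v ^+ 2 = 1.
  have := congr1 (fun Y : 'M[R]_n.+1 => Y i i) HBB; rewrite !mxE eqxx /= => H.
  apply: etrans H; by apply: eq_bigr => v _; rewrite !mxE expr2.
have Ray : \sum_v b v * (\sum_w (if circ_adjb a1 a2 v w then 1 else 0) * b w) = lam 0 i.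
  transitivity (\sum_v b v * (lam 0 i * b v)).
    apply: eq_bigr => v _; congr (_ * _); rewrite -Hlam.
    by apply: eq_bigr => w _; rewrite mxE.
  rewrite -[RHS]mulr1 -bn mulr_sumr; apply: eq_bigr => v _; rewrite expr2; ring.
have Qb : Qe a1 a2 b = 4 - lam 0 i.
  have := energy b h1 h12 h2; rewrite Ray bn => ->; ring.
have QbK : Qe a1 a2 b * NN ^+ 2 <= K by rewrite Qb.
have sb : \sum_v b v = 0.
  have E4 : lam 0 i * \sum_v b v = 4 * \sum_v b v.
    rewrite mulr_sumr.
    transitivity (\sum_v \sum_w (if circ_adjb a1 a2 v w then 1 else 0) * b w).
      apply: eq_bigr => v _; rewrite -Hlam.
      by apply: eq_bigr => w _; rewrite mxE.
    rewrite (eq_bigr _ (fun v _ => nbr v b h1 h12 h2)) !big_split /= !sum_sh; ring.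
  case: (lam 0 i =P 4) => [l4|/eqP ln4]; last first.
    have : (lam 0 i - 4) * \sum_v b v = 0 by rewrite mulrBl E4 subrr.
    by move/eqP; rewrite mulf_eq0 subr_eq0 (negbTE ln4) /= => /eqP.
  exfalso.
  have Qb0 : Qe a1 a2 b = 0 by rewrite Qb l4 subrr.
  have z : forall v, b (sh n a1 v) = b v.
    move=> v; have := @psumr_eq0P R _ predT (fun v => (b (sh n a1 v) - b v)^+2 + (b (sh n a2 v) - b v)^+2) (fun v _ => addr_ge0 (sqr_ge0 _) (sqr_ge0 _)) Qb0 v isT.
    have := sqr_ge0 (b (sh n a1 v) - b v); have := sqr_ge0 (b (sh n a2 v) - b v).
    move=> p2 p1 /= H0.
    have : (b (sh n a1 v) - b v) ^+ 2 = 0 by lra.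
    by move/eqP; rewrite sqrf_eq0 subr_eq0 => /eqP.
  have wc : forall k, b (sg n a1 k) = b (sg n a1 0).
    by elim => // k IH; rewrite sg_succ z.
  have bc : forall v, b v = b (sg n a1 0).
    have S0 : \sum_v (b v - b (sg n a1 0)) ^+ 2 = 0.
      rewrite -(sum_sg a1 0 (fun v => (b v - b (sg n a1 0)) ^+ 2)) //; last by rewrite h1 /=; lia.
      by apply: big1 => t _; rewrite add0n wc subrr expr0n.
    move=> v; have := @psumr_eq0P R _ predT (fun v => (b v - b (sg n a1 0)) ^+ 2) (fun v _ => sqr_ge0 _) S0 v isT.
    by move/eqP; rewrite sqrf_eq0 subr_eq0 => /eqP.
  move: ci0; rewrite /c mxE.
  have -> : \sum_j B^T i j * X j 0 = b (sg n a1 0) * \sum_(v : 'I_n.+1) xt R v.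
    rewrite mulr_sumr; apply: eq_bigr => v _; rewrite !mxE.
    by have := bc v; rewrite /b => ->.
  by rewrite xt_sum mulr0 eqxx.
have ha : (0 < a1 < n.+1)%N by clear -h1 h12 h2; apply/andP; split; lia.
set w := fun k => b (sg n a1 k).
have sw : \sum_(t < n.+1) w t = 0.
  rewrite -[in RHS]sb -(sum_sg a1 0 b pr ha).
  by apply: eq_bigr => t _; rewrite add0n.
have [k0 [k0N cross]] := @zero_cross R w n.+1 (ltn0Sn n) sw.
have WB := @walk_bound R w k0 cross.
set E1 := \sum_v (b (sh n a1 v) - b v) ^+ 2.
have E0 : 0 <= E1 by apply: sumr_ge0 => v _; apply: sqr_ge0.
have E1Q : E1 <= Qe a1 a2 b.
  by apply: ler_sum => v _; rewrite lerDl sqr_ge0.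
have dE : \sum_(t < n.+1) (w (k0 + t).+1 - w (k0 + t)%N) ^+ 2 = E1.
  rewrite /E1 -(sum_sg a1 k0 (fun v => (b (sh n a1 v) - b v) ^+ 2) pr ha).
  by apply: eq_bigr => t _; rewrite /w -sg_succ.
have wb : forall j, (j < n.+1)%N -> w (k0 + j)%N ^+ 2 <= j.+1%:R * (2 * E1).
  move=> j jN; apply: le_trans (WB j) _; apply: ler_wpM2l => //.
  have d0 : (w k0.+1 - w k0) ^+ 2 <= E1.
    rewrite -dE big_ord_recl /= addn0 lerDl.
    by apply: sumr_ge0 => t _; apply: sqr_ge0.
  have d1 : \sum_(t < j) (w (k0 + t).+1 - w (k0 + t)%N) ^+ 2 <= E1.
    rewrite -dE (big_ord_widen n.+1 (fun t => (w (k0 + t).+1 - w (k0 + t)%N) ^+ 2) (ltnW jN)).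
    rewrite [X in _ <= X](bigID (fun t : 'I_n.+1 => (t < j)%N)) /= lerDl.
    by apply: sumr_ge0 => t _; apply: sqr_ge0.
  have -> : 2 * E1 = E1 + E1 by rewrite mulr2n mulrDl mul1r.
  exact: lerD d0 d1.
set L := (n.+1 %/ m)%N.
have hL : (L <= n.+1)%N by apply: leq_div.
set g := fun j : 'I_L => sg n a1 (k0 + widen_ord hL j).
have ginj : injective g.
  move=> j j' /(@sg_inj n a1 k0 pr ha) /(congr1 val) /= e; exact: val_inj.
exists (g @: setT), i; split.
  by rewrite card_imset // cardsT card_ord.
rewrite /mu big_imset /=; last by move=> x y _ _; apply: ginj.
have Sb : \sum_(j in [set: 'I_L]) `|col i B (g j) ord0| ^+ 2 <= L%:R * (L%:R * (2 * E1)).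
  apply: le_trans (_ : \sum_(j in [set: 'I_L]) L%:R * (2 * E1) <= _).
    apply: ler_sum => j _.
    rewrite mxE real_normK ?num_real //.
    have jL := ltn_ord j.
    apply: le_trans (wb j _) _; first by clear -jL hL; lia.
    apply: ler_wpM2r; first by apply: mulr_ge0.
    by rewrite ler_nat.
  by rewrite sumr_const cardsT card_ord -[_ *+ L]mulr_natl.
apply: le_trans (_ : 4 * m%:R * (L%:R * (L%:R * (2 * E1))) <= 1).
  by apply: ler_wpM2l => //; apply: mulr_ge0.
apply: (@final_arith R _ _ NN _ A (16 * 1024)).
- exact: ler0n.
- by rewrite ltr0n.
- exact: E0.
- rewrite /NN -natrM ler_nat; exact: leq_trunc_div.
- apply: le_trans (_ : Qe a1 a2 b * NN ^+ 2 <= _).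
    by apply: ler_wpM2r => //; apply: sqr_ge0.
  exact: QbK.
- have := hm; rewrite -(ler_nat R) !natrM => h. by rewrite /A natrX expr2.
Qed.

Lemma floor_conv (R : realType) (m n : nat) : (0 < m)%N -> (0 < n)%N ->
  `|(n %/ m)%N%:R / n%:R - 1 / m%:R| < 1 / n%:R :> R.
Proof.
move=> m0 n0.
have h1 : ((n %/ m) * m <= n)%N := leq_trunc_div n m.
have h2 : (n < (n %/ m).+1 * m)%N := ltn_ceil n m0.
move: h1 h2; rewrite -!(ltr_nat R) -!(ler_nat R) !natrM -addn1 natrD.
set q := (n %/ m)%N%:R; set mr := m%:R; set nr := n%:R => h1 h2.
have mr0 : 0 < mr by rewrite ltr0n.
have nr0 : 0 < nr by rewrite ltr0n.
have e : q / nr - 1 / mr = (q * mr - nr) / (nr * mr) by field; rewrite ?lt0r_neq0 //; apply/andP; split; rewrite lt0r_neq0.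
rewrite e ltr_norml.
have nm0 : 0 < nr * mr by apply: mulr_gt0.
rewrite ltr_pdivrMr // ltr_pdivlMr //.
rewrite mulNr.
have -> : 1 / nr * (nr * mr) = mr by field; rewrite lt0r_neq0.
apply/andP; split; lra.
Qed.

Lemma last_arith (R : realType) (mr x : R) : 0 < mr -> 4 * mr * x <= 1 ->
  - (1 / (2 * mr)) < x - 1 / mr -> False.
Proof.
move=> m0 h1 h2.
have e : 1 / mr = 2 * (1 / (2 * mr)) by field; rewrite lt0r_neq0.
rewrite e in h2.
have h3 : 1 / (2 * mr) < x by lra.
have m2 : 0 < 2 * mr by lra.
move: h3; rewrite ltr_pdivrMr // => h3.
have : 2 < 4 * mr * x.
  have -> : 4 * mr * x = 2 * (x * (2 * mr)) by ring.
  lra.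
lra.
Qed.

Theorem theorem2 (R : realType) (a1 a2 : nat) (A : pred nat)
  (B : forall n : nat, 'M[R]_n) :
  (1 <= a1)%N -> (a1 < a2)%N ->
  infinite_nat A ->
  (forall n, A n -> prime n /\ (2 * a2 < n)%N) ->
  (forall n, A n -> orthonormal_eigenbasis (circ_adj R n a1 a2) (B n)) ->
  exists (p : R) (S : forall n : nat, {set 'I_n}) (phi : forall n : nat, 'cV[R]_n),
    [/\ 0 < p < 1,
        conv_along A (fun n => (#|S n|%:R / n%:R : R)) p,
        (forall n, A n -> exists i : 'I_n, phi n = col i (B n)) &
        ~ conv_along A (fun n => mu (phi n) (S n)) p].
Proof.
move=> h1 h12 infA hpr hB.
set m := (8 * (16 * 1024 * a2 ^ 2))%N.
have A0 : (0 < a2 ^ 2)%N by rewrite expn_gt0; lia.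
have m0 : (0 < m)%N by rewrite /m muln_gt0 /= muln_gt0 A0 andbT.
have m2 : (1 < m)%N by rewrite /m; move: A0; generalize (a2 ^ 2)%N => x; clear; lia.
set mr : R := m%:R.
have mr0 : 0 < mr by rewrite ltr0n.
have mr1 : 1 < mr by rewrite ltr1n.
pose P n (SP : {set 'I_n} * 'cV[R]_n) : bool :=
  A n ==> [&& #|SP.1| == (n %/ m)%N, 4 * mr * mu SP.2 SP.1 <= 1 & [exists i, SP.2 == col i (B n)]].
have ex : forall n, exists SP, P n SP.
  move=> n; rewrite /P; case An : (A n) => /=; last by exists (set0, 0).
  have [pn hn] := hpr n An.
  case: n An pn hn => [|n] An pn hn; first by [].
  have [S [i [cS hS]]] := @core R n a1 a2 (B n.+1) m h1 h12 hn pn (hB _ An) (leqnn _).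
  exists (S, col i (B n.+1)); rewrite /= cS eqxx hS /=.
  by apply/existsP; exists i.
pose F n := xchoose (ex n).
have FP : forall n, A n -> [/\ #|(F n).1| = (n %/ m)%N, 4 * mr * mu (F n).2 (F n).1 <= 1 &
     exists i, (F n).2 = col i (B n)].
  move=> n An; have := xchooseP (ex n); rewrite /P => /implyP /(_ An) /and3P [/eqP e1 e2 /existsP [i /eqP e3]].
  by split => //; exists i.
exists (1 / mr), (fun n => (F n).1), (fun n => (F n).2); split.
- apply/andP; split; first by rewrite divr_gt0.
  by rewrite ltr_pdivrMr // mul1r.
- move=> eps eps0.
  have he : 0 <= eps^-1 by rewrite invr_ge0 ltW.
  have := archi_boundP he; set N := Num.Def.archi_bound _ => hN.
  exists N.+1 => n An nN.
  have n0 : (0 < n)%N by lia.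
  have [cS _ _] := FP n An.
  rewrite cS; apply: lt_trans (@floor_conv R m n m0 n0) _.
  have NN0 : 0 < N.+1%:R :> R by rewrite ltr0n.
  apply: le_lt_trans (_ : 1 / N.+1%:R < eps); last first.
    rewrite ltr_pdivrMr // mulrC -ltr_pdivrMr // div1r.
    by apply: lt_le_trans hN _; rewrite ler_nat.
  rewrite !div1r lef_pV2 ?posrE ?ltr0n //.
  by rewrite ler_nat.
- by move=> n An; have [_ _ e] := FP n An.
- move=> hc.
  have e0 : 0 < 1 / (2 * mr) by rewrite divr_gt0 // mulr_gt0.
  have [N HN] := hc _ e0.
  have [n [nN An]] := infA N.
  have := HN n An nN.
  have [_ hmu _] := FP n An.
  have mu0 : 0 <= mu (F n).2 (F n).1 by apply: sumr_ge0 => v _; apply: sqr_ge0.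
  move: hmu mu0; set x := mu _ _ => hmu mu0.
  rewrite ltr_norml => /andP [h _].
  exact: (@last_arith R mr x mr0 hmu h).
Qed.
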